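(* Let $R$ be a ring, $\mathcal C$ a Cartier $R$-algebra and $\mathfrak a\subset R$ a $\mathcal C$-ideal. If $(R,\mathcal C)$ is purely $F$-regular along $\mathfrak a$, then $(R,\mathcal C)$ is $F$-pure, $\mathfrak a$ is a radical ideal, and the minimal primes of $\mathfrak a$ are pairwise coprime (i.e. any two distinct minimal primes $\mathfrak p_i,\mathfrak p_j$ satisfy $\mathfrak p_i+\mathfrak p_j=R$).
   Context: All rings are noetherian $F$-finite commutative $\mathbb F_p$-algebras. $F^e_*R$ is $R$ viewed as an $R$-module via the $e$-th Frobenius $r\mapsto r^{p^e}$, and $\mathcal C_{e,R}=\operatorname{Hom}_R(F^e_*R,R)$ ($\mathcal C_{0,R}=R$). The full Cartier algebra $\mathcal C_R=\bigoplus_{e\ge0}\mathcal C_{e,R}$ has product $\phi\cdot\phi'=\phi\circ F^e_*\phi'$ for $\phi\in\mathcal C_{e,R}$, $\phi'\in\mathcal C_{e',R}$. A Cartier $R$-algebra is a graded $R$-subalgebra $\mathcal C=\bigoplus_e\mathcal C_e\subseteq\mathcal C_R$; $\mathcal C_+=\bigoplus_{e>0}\mathcal C_e$. An ideal $\mathfrak b$ is a $\mathcal C$-ideal if $\phi(F^e_*\mathfrak b)\subseteq\mathfrak b$ for all $\phi\in\mathcal C_e$, all $e$. For an ideal $\mathfrak b$, $\mathcal C_+\mathfrak b$ is the ideal generated by all $\phi(F^e_*b)$ with $e>0$, $\phi\in\mathcal C_e$, $b\in\mathfrak b$. $(R,\mathcal C)$ is $F$-pure if $\mathcal C_+R=R$.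 A prime $\mathcal C$-ideal $\mathfrak p$ is a center of $F$-purity if $\mathcal C_+R\not\subseteq\mathfrak p$. $(R,\mathcal C)$ is non-degenerate along a $\mathcal C$-ideal $\mathfrak a$ if every minimal prime of $\mathfrak a$ is a center of $F$-purity, and purely $F$-regular along $\mathfrak a$ if it is non-degenerate along $\mathfrak a$ and every proper $\mathcal C$-ideal is contained in some minimal prime of $\mathfrak a$. *)

(* Defs.v *)
From HB Require Import structures.
From mathcomp Require Import all_boot all_order all_algebra.
Set Implicit Arguments. Unset Strict Implicit. Unset Printing Implicit Defensive.
Import GRing.Theory.
Local Open Scope ring_scope.

Section Cartier.
Variable R : comPzRingType.
Variable p : nat.

Definition is_ideal (I : R -> Prop) : Prop :=
  [/\ I 0, (forall x y, I x -> I y -> I (x + y)) & (forall r x, I x -> I (r * x))].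

Definition whole_ideal (I : R -> Prop) : Prop := forall x, I x.

Definition proper_ideal (I : R -> Prop) : Prop := is_ideal I /\ ~ I 1.

Definition subideal (I J : R -> Prop) : Prop := forall x, I x -> J x.

Definition same_ideal (I J : R -> Prop) : Prop := forall x, I x <-> J x.

Definition is_prime (P : R -> Prop) : Prop :=
  [/\ is_ideal P, ~ P 1 & (forall a b, P (a * b) -> P a \/ P b)].

Definition is_radical (I : R -> Prop) : Prop :=
  forall x n, I (x ^+ n) -> I x.

Definition minimal_prime_of (I P : R -> Prop) : Prop :=
  [/\ is_prime P, subideal I P &
      (forall Q, is_prime Q -> subideal I Q -> subideal Q P -> subideal P Q)].

Definition ideal_sum (I J : R -> Prop) : R -> Prop :=
  fun x => exists y z, [/\ I y, J z & x = y + z].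

Definition ideal_gen (S : R -> Prop) : R -> Prop :=
  fun x => forall J, is_ideal J -> subideal S J -> J x.

Definition Fp_algebra : Prop := prime p /\ (p%:R : R) = 0.

Definition noetherian : Prop :=
  forall I : nat -> R -> Prop,
    (forall n, is_ideal (I n)) -> (forall n, subideal (I n) (I n.+1)) ->
    exists N, forall n, (N <= n)%N -> subideal (I n) (I N).

(* F-finite: F_* R is a finitely generated R-module, where r acts on F_* R
   by multiplication by r^p. *)
Definition F_finite : Prop :=
  exists s : seq R, forall x, exists c : seq R,
    size c = size s /\ x = \sum_(i < size s) (c`_i) ^+ p * s`_i.

(* phi : F^e_* R -> R is R-linear: additive and phi (r^(p^e) x) = r phi(x). *)
Definition p_e_linear (e : nat) (phi : R -> R) : Prop :=
  (forall x y, phi (x + y) = phi x + phi y) /\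
  (forall r x, phi (r ^+ (p ^ e) * x) = r * phi x).

(* A Cartier R-algebra: a graded R-subalgebra C = (+)_e C_e of the full
   Cartier algebra; C e is the set of degree-e elements. Product of
   phi in C_e and phi' in C_e' is phi o phi' in C_(e+e'); C_0 = R acting
   by multiplication. *)
Definition cartier_algebra (C : nat -> (R -> R) -> Prop) : Prop :=
  [/\ (forall e phi, C e phi -> p_e_linear e phi),
      (forall r, C 0%N (fun x => r * x)),
      (forall e, C e (fun _ => 0)),
      (forall e phi psi, C e phi -> C e psi -> C e (fun x => phi x + psi x)) &
      (forall e e' phi psi, C e phi -> C e' psi -> C (e + e')%N (phi \o psi))].

Definition C_ideal (C : nat -> (R -> R) -> Prop) (b : R -> Prop) : Prop :=
  is_ideal b /\ (forall e phi x, C e phi -> b x -> b (phi x)).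

Definition Cplus (C : nat -> (R -> R) -> Prop) (b : R -> Prop) : R -> Prop :=
  ideal_gen (fun y => exists e phi x, [/\ (0 < e)%N, C e phi, b x & y = phi x]).

Definition F_pure (C : nat -> (R -> R) -> Prop) : Prop :=
  whole_ideal (Cplus C (fun _ => True)).

Definition center_of_F_purity (C : nat -> (R -> R) -> Prop) (P : R -> Prop) : Prop :=
  [/\ is_prime P, C_ideal C P & ~ subideal (Cplus C (fun _ => True)) P].

Definition non_degenerate_along (C : nat -> (R -> R) -> Prop) (a : R -> Prop) : Prop :=
  forall P, minimal_prime_of a P -> center_of_F_purity C P.

Definition purely_F_regular_along (C : nat -> (R -> R) -> Prop) (a : R -> Prop) : Prop :=
  non_degenerate_along C a /\
  (forall b, C_ideal C b -> proper_ideal b ->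
     exists P, minimal_prime_of a P /\ subideal b P).

End Cartier.

(* Main.v *)
Require Import Defs.
From mathcomp Require Import all_boot all_order all_algebra.
From Stdlib Require Import Classical.
Set Implicit Arguments. Unset Strict Implicit. Unset Printing Implicit Defensive.
Import GRing.Theory.
Local Open Scope ring_scope.

Section Helpers.
Variable R : comPzRingType.

Lemma ideal_gen_ideal (S : R -> Prop) : is_ideal (ideal_gen S).
Proof.
split.
- by move=> J [J0 _ _] _.
- by move=> x y Hx Hy J HJ HS; case: (HJ) => _ Hadd _; apply: Hadd; [apply: Hx|apply: Hy].
- by move=> r x Hx J HJ HS; case: (HJ) => _ _ Hm; apply: Hm; apply: Hx.
Qed.

Lemma ideal_gen_sub (S : R -> Prop) : subideal S (ideal_gen S).
Proof. by move=> x Sx J _ HS; apply: HS. Qed.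

Lemma whole_of_1 (I : R -> Prop) : is_ideal I -> I 1 -> whole_ideal I.
Proof. by move=> [_ _ Hm] H1 x; rewrite -(mulr1 x); apply: Hm. Qed.

End Helpers.

Theorem proposition2p8 (R : comPzRingType) (p : nat)
    (C : nat -> (R -> R) -> Prop) (a : R -> Prop) :
  Fp_algebra R p -> noetherian R -> F_finite R p ->
  cartier_algebra p C -> C_ideal C a ->
  purely_F_regular_along C a ->
  [/\ F_pure C, is_radical a &
      (forall P Q, minimal_prime_of a P -> minimal_prime_of a Q ->
         ~ same_ideal P Q -> whole_ideal (ideal_sum P Q))].
Proof.
move=> [pr _] _ _ [Hlin Hmul H0 Hadd Hcomp] [[a0 aadd amul] aC] [Hnd Hreg].
set J := Cplus C (fun _ => True).
have JI : is_ideal J by apply: ideal_gen_ideal.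
have JC : C_ideal C J.
  split => // e phi x Ce Jx.
  case: e Ce => [|e] Ce.
    have [_ Hl] := Hlin _ _ Ce.
    have -> : phi x = x * phi 1 by rewrite -Hl expn0 expr1 mulr1.
    by case: JI => _ _ Hm; rewrite mulrC; apply: Hm.
  by apply: ideal_gen_sub; exists e.+1, phi, x.
have FP : F_pure C.
  apply: whole_of_1 => //.
  apply: NNPP => HJ1.
  have [P [mP sJP]] := Hreg J JC (conj JI HJ1).
  by have [_ _ nsub] := Hnd P mP; apply: nsub.
have J1 : J 1 by apply: FP.
have p2 : (2 <= p)%N by apply: prime_gt1.
have step : forall x n, a (x ^+ n.+2) -> a (x ^+ n.+1).
  move=> x n Ha.
  set K := fun y => a (x ^+ n.+1 * y).
  have KI : is_ideal K.
    split; rewrite /K.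
    - by rewrite mulr0.
    - by move=> y z Hy Hz; rewrite mulrDr; apply: aadd.
    - by move=> r y Hy; rewrite mulrCA; apply: amul.
  have : K 1.
    apply: J1 => //.
    move=> y [e [phi [z [e0 Ce _ ->]]]].
    rewrite /K.
    have [_ Hl] := Hlin _ _ Ce.
    rewrite -Hl; apply: (aC e) => //.
    have pe : (p <= p ^ e)%N.
      by rewrite -{1}(expn1 p) leq_pexp2l // prime_gt0.
    have le : (n.+2 <= n.+1 * p ^ e)%N.
      have : (n.+1 * 2 <= n.+1 * p ^ e)%N
        by rewrite leq_mul2l; apply: leq_trans pe.
      by apply: leq_trans; rewrite muln2 -addnn addSn addnS !ltnS leq_addl.
    rewrite -exprM -(subnKC le) exprD -mulrA mulrC.
    by apply: amul.
  by rewrite /K mulr1.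
split => //.
- move=> x n; elim: n => [|n IH].
    rewrite expr0 => H1; rewrite -(mulr1 x); by apply: amul.
  case: n IH => [|n] IH; first by rewrite expr1.
  by move=> H; apply: IH; apply: step.
- move=> P Q mP mQ nPQ.
  have [PP PC _] := Hnd P mP.
  have [QP QC _] := Hnd Q mQ.
  case: PC => [[P0 Padd Pmul] PCc]; case: QC => [[Q0 Qadd Qmul] QCc].
  set S := ideal_sum P Q.
  have SI : is_ideal S.
    split.
    - by exists 0, 0; split => //; rewrite addr0.
    - move=> x y [y1 [z1 [Hy1 Hz1 ->]]] [y2 [z2 [Hy2 Hz2 ->]]].
      exists (y1 + y2), (z1 + z2); split; [exact: Padd|exact: Qadd|].
      by rewrite addrACA.
    - move=> r x [y [z [Hy Hz ->]]]; exists (r * y), (r * z); split;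
        [exact: Pmul|exact: Qmul|by rewrite mulrDr].
  apply: whole_of_1 => //.
  apply: NNPP => HS1.
  have SC : C_ideal C S.
    split => // e phi x Ce [y [z [Hy Hz ->]]].
    have [Ha _] := Hlin _ _ Ce.
    by exists (phi y), (phi z); split; [exact: (PCc e)|exact: (QCc e)|].
  have [M [[MP aM Mmin] sSM]] := Hreg S SC (conj SI HS1).
  have PM : subideal P M by move=> x Hx; apply: sSM; exists x, 0; split => //; rewrite addr0.
  have QM : subideal Q M by move=> x Hx; apply: sSM; exists 0, x; split => //; rewrite add0r.
  case: mP => [_ aP _]; case: mQ => [_ aQ _].
  have MP' := Mmin P PP aP PM.
  have MQ' := Mmin Q QP aQ QM.
  by apply: nPQ => x; split => H; [apply: MQ'; apply: PM|apply: MP'; apply: QM].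
Qed.
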